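(* Let $X$ be a finite set, $b\in\mathbb{N}$, $(\varphi_i)_{i\in[1,b]}$ an individual bin evaluation, and $(X_1,\dots,X_\tau)$ a type partition of $X$. Let $X'\subseteq X$ and let $\vec p,\vec q\in\mathbb{N}_0^\tau$ be such that $|X_j\cap X'|\ge p_j$ and $|X_j\cap(X\setminus X')|\ge q_j$ for all $j\in[1,\tau]$. Then for every $i\in[1,b]$ there exist sets $X_{\vec p}\subseteq X'$ containing exactly $p_j$ elements of $X_j\cap X'$ for every $j$ and $X_{\vec q}\subseteq X\setminus X'$ containing exactly $q_j$ elements of $X_j\cap(X\setminus X')$ for every $j$, and the value $\varphi_i((X'\setminus X_{\vec p})\cup X_{\vec q})$ is the same for every such choice of $X_{\vec p}$ and $X_{\vec q}$ (so the type vector operation $\varphi_i((X'\setminus\vec p)\cup\vec q):=\varphi_i((X'\setminus X_{\vec p})\cup X_{\vec q})$ is well-defined).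
   Context: For integers $a\le b$, $[a,b]=\{i\in\mathbb{N}: a\le i\le b\}$. Fix $\mathrm{inf}\in\{\infty,-\infty\}$. An individual bin evaluation is a $b$-tuple $(\varphi_i)_{i\in[1,b]}$ of functions $\varphi_i:2^X\to\mathbb{Z}\cup\{\mathrm{inf}\}$. Two elements $x,y\in X$ are target equivalent if for every $i\in[1,b]$ and every $A\subseteq X$ with $\{x,y\}\cap A=\{x\}$ we have $\varphi_i((A\setminus\{x\})\cup\{y\})=\varphi_i(A)$. A type partition of $X$ is a tuple $(X_1,\dots,X_\tau)$ of pairwise disjoint sets with union $X$ such that the elements of each $X_j$ are pairwise target equivalent. *)

(* Defs.v *)
From mathcomp Require Import all_boot all_order all_algebra.
Set Implicit Arguments. Unset Strict Implicit. Unset Printing Implicit Defensive.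

(* Values in Z ∪ {inf}: [Some z] is the integer z, [None] is the fixed
   infinite value inf (either +oo or -oo; which one is irrelevant here). *)
Definition zinf := option int.

(* An individual bin evaluation on the finite ground set X = T, with b bins;
   bins are indexed 0..b-1 (instead of 1..b). *)
Definition bin_eval (T : finType) (b : nat) := 'I_b -> {set T} -> zinf.

Definition target_equiv (T : finType) (b : nat) (phi : bin_eval T b) (x y : T) : Prop :=
  forall (i : 'I_b) (A : {set T}), [set x; y] :&: A = [set x] ->
    phi i ((A :\ x) :|: [set y]) = phi i A.

Definition type_partition (T : finType) (b : nat) (phi : bin_eval T b)
    (tau : nat) (Xs : 'I_tau -> {set T}) : Prop :=
  [/\ forall j k : 'I_tau, j != k -> [disjoint Xs j & Xs k],
      \bigcup_(j < tau) Xs j = [set: T]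
    & forall (j : 'I_tau) (x y : T), x \in Xs j -> y \in Xs j -> target_equiv phi x y].

Definition selects (T : finType) (tau : nat) (Xs : 'I_tau -> {set T})
    (Y : {set T}) (p : 'I_tau -> nat) (S : {set T}) : Prop :=
  S \subset Y /\ forall j : 'I_tau, #|S :&: (Xs j :&: Y)| = p j.

(* Main.v *)
Require Import Defs.
From mathcomp Require Import all_boot all_order all_algebra.
From mathcomp Require Import zify.

Lemma sub_of_size (T : finType) (A : {set T}) n :
  n <= #|A| -> exists B : {set T}, B \subset A /\ #|B| = n.
Proof.
elim: n => [|n IH] H.
  by exists set0; rewrite sub0set cards0.
have [B [sB cB]] := IH (ltnW H).
have : ~~ (A \subset B).
  apply/negP => sAB; have := subset_leq_card sAB; rewrite cB; lia.
case/subsetPn => x xA xB.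
exists (x |: B); split.
  by apply/subsetP => z; rewrite !inE => /orP [/eqP -> //| /(subsetP sB)].
by rewrite cardsU1 xB cB.
Qed.

Section Key.
Variables (T : finType) (b : nat) (phi : bin_eval T b) (tau : nat)
  (Xs : 'I_tau -> {set T}).
Hypothesis Htp : type_partition phi Xs.

Lemma in_some x : exists j, x \in Xs j.
Proof.
case: Htp => _ cov _.
have : x \in \bigcup_(j < tau) Xs j by rewrite cov inE.
by case/bigcupP => j _ xj; exists j.
Qed.

Lemma same_type j k x : x \in Xs j -> x \in Xs k -> j = k.
Proof.
case: Htp => dis _ _ xj xk.
case: (eqVneq j k) => // /dis /disjoint_setI0 H.
have : x \in Xs j :&: Xs k by rewrite inE xj xk.
by rewrite H inE.
Qed.

Lemma find_other {A B : {set T}} {x} :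
  (forall j, #|A :&: Xs j| = #|B :&: Xs j|) -> x \in A -> x \notin B ->
  exists2 y, y \in B & y \notin A /\ (forall k, (x \in Xs k) = (y \in Xs k)).
Proof.
move=> Hc xA xB; have [j xj] := in_some x.
have : ~~ (B :&: Xs j \subset A :&: Xs j).
  apply/negP => sub.
  have pr : B :&: Xs j \proper A :&: Xs j.
    apply/properP; split => //; exists x; first by rewrite inE xA xj.
    by rewrite inE (negbTE xB).
  by have := proper_card pr; rewrite Hc ltnn.
case/subsetPn => y; rewrite !inE => /andP [yB yj]; rewrite yj andbT => yA.
exists y => //; split => // k.
apply/idP/idP => H.
  by rewrite -(same_type _ _ _ xj H).
by rewrite -(same_type _ _ _ yj H).
Qed.

Lemma key (i : 'I_b) n : forall A B : {set T}, #|A :\: B| <= n ->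
  (forall j, #|A :&: Xs j| = #|B :&: Xs j|) -> phi i A = phi i B.
Proof.
elim: n => [|n IH] A B Hn Hc.
  have sAB : A \subset B by rewrite -setD_eq0 -cards_eq0; lia.
  suff -> : A = B by [].
  apply/eqP; rewrite eqEsubset sAB /=; apply/negP => /negP.
  case/subsetPn => y yB yA.
  have [x xA [xnB _]] := find_other (A:=B) (B:=A) (fun j => esym (Hc j)) yB yA.
  by move: (subsetP sAB x xA); rewrite (negbTE xnB).
case: (set_0Vmem (A :\: B)) => [E|[x]].
  by apply: (IH A B) => //; rewrite E cards0.
rewrite inE => /andP [xB xA].
have [y yB [yA Hxy]] := find_other Hc xA xB.
case: Htp => _ _ teq.
have [j xj] := in_some x.
have yj : y \in Xs j by rewrite -Hxy.
have E1 : [set x; y] :&: A = [set x].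
  apply/setP => z; rewrite !inE.
  case: (eqVneq z x) => [->|_] /=; first by rewrite xA ?eqxx ?orbT.
  by case: (eqVneq z y) => [->|] //=; rewrite ?eqxx (negbTE yA).
rewrite -(teq j x y xj yj i A E1).
apply: IH.
  have -> : ((A :\ x) :|: [set y]) :\: B = (A :\: B) :\ x.
    apply/setP => z; rewrite !inE.
    case: (eqVneq z y) => [->|]; first by rewrite yB /= andbF.
    by move=> _; case: (z \in B); case: (z == x); case: (z \in A).
  move: Hn; rewrite (cardsD1 x (A :\: B)) !inE xA xB /=; lia.
move=> k; rewrite -Hc.
case xk : (x \in Xs k).
  have yk : y \in Xs k by rewrite -Hxy.
  have -> : ((A :\ x) :|: [set y]) :&: Xs k = y |: ((A :&: Xs k) :\ x).
    apply/setP => z; rewrite !inE; case: (eqVneq z y) => [->|] /=.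
    by rewrite orbT yk.
    by move=> _; rewrite orbF andbA.
  rewrite cardsU1 !inE (negbTE yA) /= (cardsD1 x (A :&: Xs k)) !inE xA xk /=.
  by rewrite andbF.

have yk : (y \in Xs k) = false by rewrite -Hxy.
have -> : (A :\ x :|: [set y]) :&: Xs k = A :&: Xs k.
  apply/setP => z; rewrite !inE.
  case: (eqVneq z y) => [->|_]; first by rewrite yk !andbF.
  by case: (eqVneq z x) => [->|_]; rewrite ?xk ?andbF /= ?orbF.
by [].

Qed.
End Key.

Lemma exists_sel (T : finType) (b : nat) (phi : bin_eval T b)
    (tau : nat) (Xs : 'I_tau -> {set T}) (Htp : type_partition phi Xs)
    (Y : {set T}) (r : 'I_tau -> nat) :
  (forall j, r j <= #|Xs j :&: Y|) -> exists S, selects Xs Y r S.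
Proof.
move=> Hr.
have [B HB] := fin_all_exists (fun j => @sub_of_size _ _ _ (Hr j)).
exists (\bigcup_(j < tau) B j); split.
  apply/bigcupsP => j _; apply: subset_trans (proj1 (HB j)) _.
  exact: subsetIr.
move=> j; rewrite -(proj2 (HB j)); apply: eq_card => z.
rewrite !inE; apply/idP/idP.
  case/andP => /bigcupP [k _ zk] /andP [zj zY].
  have := subsetP (proj1 (HB k)) z zk; rewrite inE => /andP [zk' _].
  by rewrite -(@same_type _ _ _ _ _ Htp _ _ _ zk' zj).
move=> zj; have := subsetP (proj1 (HB j)) z zj; rewrite inE => ->.
by rewrite andbT; apply/bigcupP; exists j.
Qed.

Lemma count_eq (T : finType) (tau : nat) (Xs : 'I_tau -> {set T})
    (X' : {set T}) (p q : 'I_tau -> nat) Xp Xq j :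
  selects Xs X' p Xp -> selects Xs (~: X') q Xq ->
  #|((X' :\: Xp) :|: Xq) :&: Xs j| = #|Xs j :&: X'| - p j + q j.
Proof.
move=> [sp cp] [sq cq].
have E : ((X' :\: Xp) :|: Xq) :&: Xs j
       = ((Xs j :&: X') :\: Xp) :|: (Xq :&: (Xs j :&: ~: X')).
  apply/setP => z; rewrite !inE.
  case hq: (z \in Xq).
    have := subsetP sq z hq; rewrite inE => /negbTE ->.
    by case: (z \in Xp); case: (z \in Xs j).
  by case: (z \in Xp); case: (z \in Xs j); case: (z \in X').
rewrite E cardsU.
have -> : ((Xs j :&: X') :\: Xp) :&: (Xq :&: (Xs j :&: ~: X')) = set0.
  apply/setP => z; rewrite !inE.
  by case: (z \in Xp); case: (z \in Xs j); case: (z \in X'); rewrite ?andbF.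
rewrite cards0 subn0 cardsD.
by rewrite (setIC (Xs j :&: X')) cp cq.
Qed.

Theorem proposition8 (T : finType) (b : nat) (phi : bin_eval T b)
    (tau : nat) (Xs : 'I_tau -> {set T})
    (Htp : type_partition phi Xs)
    (X' : {set T}) (p q : 'I_tau -> nat)
    (Hp : forall j : 'I_tau, p j <= #|Xs j :&: X'|)
    (Hq : forall j : 'I_tau, q j <= #|Xs j :&: ~: X'|) :
  forall i : 'I_b,
    (exists Xp Xq : {set T}, selects Xs X' p Xp /\ selects Xs (~: X') q Xq) /\
    (forall Xp Xq Xp' Xq' : {set T},
        selects Xs X' p Xp -> selects Xs (~: X') q Xq ->
        selects Xs X' p Xp' -> selects Xs (~: X') q Xq' ->
        phi i ((X' :\: Xp) :|: Xq) = phi i ((X' :\: Xp') :|: Xq')).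
Proof.
move=> i; split.
  have [Sp Hsp] := @exists_sel _ _ _ _ _ Htp _ _ Hp.
  have [Sq Hsq] := @exists_sel _ _ _ _ _ Htp _ _ Hq.
  by exists Sp, Sq.
move=> Xp Xq Xp' Xq' s1 s2 s3 s4.
apply: (@key _ _ _ _ _ Htp i _ _ _ (leqnn _)) => j.
by rewrite (@count_eq _ _ _ _ _ _ _ _ j s1 s2) (@count_eq _ _ _ _ _ _ _ _ j s3 s4).
Qed.
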